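(* Fix $\lambda_1,\lambda_2,\lambda_3\in\mathbb{Z}_{\ge0}$ and an infinite reduced sequence $\mathbf{w}$, with ratio number sequence $\{k_j\}_{j\ge1}$. Then the sequence $\{\log k_j\}_{j\ge1}$ converges to a real number.
   Context: Generalized Markov mutations: $\mu_1(x_1,x_2,x_3)=(\frac{x_2^2+\lambda_1x_2x_3+x_3^2}{x_1},x_2,x_3)$, $\mu_2(x_1,x_2,x_3)=(x_1,\frac{x_1^2+\lambda_2x_1x_3+x_3^2}{x_2},x_3)$, $\mu_3(x_1,x_2,x_3)=(x_1,x_2,\frac{x_1^2+\lambda_3x_1x_2+x_2^2}{x_3})$. A sequence with entries in $\{1,2,3\}$ is reduced if consecutive entries differ. Ratio number sequence: $T_0=(1,1,1)$, $T_j=\mu_{w_j}(T_{j-1})$, and $k_j$ is the $w_j$-th component of $T_j$ divided by the product of the other two components of $T_j$. $\log$ is the natural logarithm. *)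

(* Defs.v *)
From Stdlib Require Import Reals.
Open Scope R_scope.

Definition triple := (R * R * R)%type.

Definition fst3 (x : triple) : R := fst (fst x).
Definition snd3 (x : triple) : R := snd (fst x).
Definition thd3 (x : triple) : R := snd x.

Definition mu (l1 l2 l3 : R) (i : nat) (x : triple) : triple :=
  let x1 := fst3 x in let x2 := snd3 x in let x3 := thd3 x in
  match i with
  | 1%nat => ((x2 ^ 2 + l1 * x2 * x3 + x3 ^ 2) / x1, x2, x3)
  | 2%nat => (x1, (x1 ^ 2 + l2 * x1 * x3 + x3 ^ 2) / x2, x3)
  | 3%nat => (x1, x2, (x1 ^ 2 + l3 * x1 * x2 + x2 ^ 2) / x3)
  | _ => x
  end.

(* The sequence w is indexed from 1: w 1, w 2, ... ; w 0 is ignored. *)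
Definition reduced_seq (w : nat -> nat) : Prop :=
  (forall j, (1 <= j)%nat -> (1 <= w j <= 3)%nat) /\
  (forall j, (1 <= j)%nat -> w j <> w (S j)).

Fixpoint Tseq (l1 l2 l3 : R) (w : nat -> nat) (j : nat) : triple :=
  match j with
  | O => (1, 1, 1)
  | S j' => mu l1 l2 l3 (w (S j')) (Tseq l1 l2 l3 w j')
  end.

Definition ratio_num (l1 l2 l3 : R) (w : nat -> nat) (j : nat) : R :=
  let t := Tseq l1 l2 l3 w j in
  match w j with
  | 1%nat => fst3 t / (snd3 t * thd3 t)
  | 2%nat => snd3 t / (fst3 t * thd3 t)
  | _ => thd3 t / (fst3 t * snd3 t)
  end.

(* Main.v *)
Require Import Defs.
From Stdlib Require Import Reals Lra Lia.
Open Scope R_scope.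

Definition rr (t : triple) (i : nat) : R :=
  match i with
  | 1%nat => fst3 t / (snd3 t * thd3 t)
  | 2%nat => snd3 t / (fst3 t * thd3 t)
  | _ => thd3 t / (fst3 t * snd3 t)
  end.

Definition KK (l1 l2 l3 : R) (t : triple) : R :=
  let x1 := fst3 t in let x2 := snd3 t in let x3 := thd3 t in
  (x1^2 + x2^2 + x3^2 + l1*x2*x3 + l2*x1*x3 + l3*x1*x2) / (x1*x2*x3).

Definition posT (t : triple) : Prop := 0 < fst3 t /\ 0 < snd3 t /\ 0 < thd3 t.

Lemma quad_pos (a b l : R) : 0 < a -> 0 < b -> 0 <= l -> 0 < a^2 + l*a*b + b^2.
Proof. intros. assert (0 <= l*a*b) by (apply Rmult_le_pos; [apply Rmult_le_pos|]; lra). nra. Qed.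

Lemma mu_pos l1 l2 l3 i t : 0 <= l1 -> 0 <= l2 -> 0 <= l3 -> posT t -> posT (mu l1 l2 l3 i t).
Proof.
  intros H1 H2 H3 [P1 [P2 P3]].
  destruct i as [|[|[|[|i]]]]; unfold posT, mu; simpl; try (repeat split; assumption);
  unfold fst3, snd3, thd3 in *; simpl; repeat split; try assumption;
  apply Rdiv_lt_0_compat; try assumption; apply quad_pos; assumption.
Qed.

Lemma mu_K l1 l2 l3 i t : 0 <= l1 -> 0 <= l2 -> 0 <= l3 -> posT t ->
  KK l1 l2 l3 (mu l1 l2 l3 i t) = KK l1 l2 l3 t.
Proof.
  destruct t as [[x1 x2] x3]. intros L1 L2 L3 [P1 [P2 P3]].
  unfold fst3, snd3, thd3 in *; simpl in *.
  pose proof (quad_pos x2 x3 l1 P2 P3 L1).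
  pose proof (quad_pos x1 x3 l2 P1 P3 L2).
  pose proof (quad_pos x1 x2 l3 P1 P2 L3).
  destruct i as [|[|[|[|i]]]]; unfold KK, mu, fst3, snd3, thd3 in *; simpl in *; try reflexivity.
  - field; repeat split; lra.
  - field; repeat split; lra.
  - field; repeat split; lra.
Qed.

Lemma rr_le_K l1 l2 l3 t i : 0 <= l1 -> 0 <= l2 -> 0 <= l3 -> posT t -> rr t i <= KK l1 l2 l3 t.
Proof.
  destruct t as [[x1 x2] x3]. intros L1 L2 L3 [P1 [P2 P3]].
  unfold fst3, snd3, thd3 in *; simpl in *.
  assert (A1 : 0 <= l1*x2*x3) by (repeat apply Rmult_le_pos; lra).
  assert (A2 : 0 <= l2*x1*x3) by (repeat apply Rmult_le_pos; lra).
  assert (A3 : 0 <= l3*x1*x2) by (repeat apply Rmult_le_pos; lra).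
  assert (D : 0 < x1*x2*x3) by (repeat apply Rmult_lt_0_compat; lra).
  unfold KK, rr, fst3, snd3, thd3; simpl.
  destruct i as [|[|[|[|i]]]];
  [ replace (x3 / (x1*x2)) with (x3^2/(x1*x2*x3)) by (field; lra)
  | replace (x1 / (x2*x3)) with (x1^2/(x1*x2*x3)) by (field; lra)
  | replace (x2 / (x1*x3)) with (x2^2/(x1*x2*x3)) by (field; lra)
  | replace (x3 / (x1*x2)) with (x3^2/(x1*x2*x3)) by (field; lra)
  | replace (x3 / (x1*x2)) with (x3^2/(x1*x2*x3)) by (field; lra) ];
  unfold Rdiv; apply Rmult_le_compat_r; try (left; apply Rinv_0_lt_compat; lra); nra.
Qed.

Lemma rr_step l1 l2 l3 t a b : 0 <= l1 -> 0 <= l2 -> 0 <= l3 -> posT t ->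
  (1 <= a <= 3)%nat -> (1 <= b <= 3)%nat -> a <> b ->
  rr t a <= rr (mu l1 l2 l3 b t) b.
Proof.
  destruct t as [[x1 x2] x3]. intros L1 L2 L3 [P1 [P2 P3]] Ha Hb Hab.
  unfold fst3, snd3, thd3 in *; simpl in *.
  assert (A1 : 0 <= l1*x2*x3) by (repeat apply Rmult_le_pos; lra).
  assert (A2 : 0 <= l2*x1*x3) by (repeat apply Rmult_le_pos; lra).
  assert (A3 : 0 <= l3*x1*x2) by (repeat apply Rmult_le_pos; lra).
  assert (D : 0 < x1*x2*x3) by (repeat apply Rmult_lt_0_compat; lra).
  destruct a as [|[|[|[|a]]]]; try lia; destruct b as [|[|[|[|b]]]]; try lia;
  unfold rr, mu, fst3, snd3, thd3; simpl;
  match goal with |- ?L <= ?R =>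
    apply Rle_trans with (L + 0); [lra|];
    apply Rle_trans with (L + (R - L)); [|lra];
    apply Rplus_le_compat_l
  end;
  match goal with |- 0 <= ?E =>
    field_simplify E; try lra end.
  all: unfold Rdiv; apply Rmult_le_pos; [nra| left; apply Rinv_0_lt_compat; nra].
Qed.

Lemma T_pos l1 l2 l3 w j : 0 <= l1 -> 0 <= l2 -> 0 <= l3 -> posT (Tseq l1 l2 l3 w j).
Proof.
  intros. induction j; simpl.
  - unfold posT, fst3, snd3, thd3; simpl; lra.
  - apply mu_pos; assumption.
Qed.

Lemma T_K l1 l2 l3 w j : 0 <= l1 -> 0 <= l2 -> 0 <= l3 ->
  KK l1 l2 l3 (Tseq l1 l2 l3 w j) = KK l1 l2 l3 (1,1,1).
Proof.
  intros. induction j; simpl; [reflexivity|].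
  rewrite mu_K; auto. apply T_pos; auto.
Qed.

Theorem corollary6p9 (l1 l2 l3 : nat) (w : nat -> nat) :
  reduced_seq w ->
  exists L : R,
    Un_cv (fun n => ln (ratio_num (INR l1) (INR l2) (INR l3) w (S n))) L.
Proof.
  intros [Hw1 Hw2].
  pose proof (pos_INR l1) as L1. pose proof (pos_INR l2) as L2. pose proof (pos_INR l3) as L3.
  set (u := fun n => ratio_num (INR l1) (INR l2) (INR l3) w (S n)).
  assert (Hu : forall n, u n = rr (Tseq (INR l1) (INR l2) (INR l3) w (S n)) (w (S n)))
    by (intro; reflexivity).
  assert (Hg : Un_growing u).
  { intro n. rewrite !Hu. change (Tseq (INR l1) (INR l2) (INR l3) w (S (S n))) with
      (mu (INR l1) (INR l2) (INR l3) (w (S (S n))) (Tseq (INR l1) (INR l2) (INR l3) w (S n))).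
    apply rr_step; auto. apply T_pos; auto. apply Hw1; lia. apply Hw1; lia. apply Hw2; lia. }
  assert (Hb : has_ub u).
  { exists (KK (INR l1) (INR l2) (INR l3) (1,1,1)). intros x [n ->].
    rewrite Hu, <- (T_K _ _ _ w (S n)); auto. apply rr_le_K; auto. apply T_pos; auto. }
  destruct (growing_cv u Hg Hb) as [l Hl].
  assert (Hu0 : 0 < u 0%nat).
  { rewrite Hu. destruct (T_pos (INR l1) (INR l2) (INR l3) w 1 L1 L2 L3) as [P1 [P2 P3]].
    unfold rr. destruct (w 1%nat) as [|[|[|]]];
    apply Rdiv_lt_0_compat; try apply Rmult_lt_0_compat; assumption. }
  assert (Hlp : 0 < l) by (pose proof (growing_ineq u l Hg Hl 0); lra).
  exists (ln l).
  apply (continuity_seq ln u l); [|exact Hl].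
  apply derivable_continuous_pt. exists (/ l). apply derivable_pt_lim_ln. exact Hlp.
Qed.
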